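(* Let $A$ be a $\mathbb{G}$-predictable set. Then $A\in\mathcal{L}^o$ if and only if, for every $\mathbb{G}$-optional process $Y$, the process $Y\mathbf{1}_A$ satisfies the global optional splitting formula at $\tau$ with respect to $\mathbb{F}$.
   Context: Let $(\Omega,\mathcal{A},\mathbb{Q})$ be a probability space with a right-continuous filtration $\mathbb{F}=(\mathcal{F}_t)_{t\ge0}$ such that $\mathcal{F}_0$ contains $\mathcal{N}^{\mathcal{F}_\infty}$, where for a $\sigma$-algebra $\mathcal{T}\subset\mathcal{A}$, $\mathcal{N}^{\mathcal{T}}$ denotes the $\sigma$-algebra generated by all subsets of $\mathcal{T}$-measurable $\mathbb{Q}$-null sets. Let $\tau$ be a random variable with values in $[0,\infty]$, let $\mathcal{N}=\mathcal{N}^{\sigma(\tau)\vee\mathcal{F}_\infty}$, and let $\mathbb{G}=(\mathcal{G}_t)_{t\ge0}$ with $\mathcal{G}_t=\mathcal{N}\vee\bigcap_{s>t}(\mathcal{F}_s\vee\sigma(\tau\wedge s))$. Identities between processes are understood up to indistinguishability outside an $\mathcal{N}$-measurable $\mathbb{Q}$-null set. For a function $Y''$ on $[0,\infty]\times(\mathbb{R}_+\times\Omega)$, $Y''(\tau)$ denotes the process $(t,\omega)\mapsto Y''(\tau(\omega),t,\omega)$. A $\mathbb{G}$-optional process $Y$ satisfies the optional splitting formula on a $\mathbb{G}$-optional set $A$ (at $\tau$ with respect to $\mathbb{F}$) if there exist $Y'\in\mathcal{O}(\mathbb{F})$ and a $\mathcal{B}[0,\infty]\otimes\mathcal{O}(\mathbb{F})$-measurable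 function $Y''$ with $Y\mathbf{1}_A=(Y'\mathbf{1}_{[0,\tau)}+Y''(\tau)\mathbf{1}_{[\tau,\infty)})\mathbf{1}_A$; the global optional splitting formula is the case $A=\mathbb{R}_+\times\Omega$. $\mathcal{L}^o$ is the family of $\mathbb{G}$-optional sets $A$ such that every $\mathbb{G}$-optional process satisfies the optional splitting formula on $A$. *)

(* Defs.v *)
From HB Require Import structures.
From mathcomp Require Import all_boot all_order all_algebra.
From mathcomp Require Import all_classical all_reals all_analysis measurable_realfun.
Set Implicit Arguments. Unset Strict Implicit. Unset Printing Implicit Defensive.
Import Order.TTheory GRing.Theory Num.Theory.
Local Open Scope classical_set_scope.
Local Open Scope ring_scope.

Section Defs.
Context {d : measure_display} {Omega : measurableType d} {R : realType}.

Definition gen {X : Type} (G : set_system X) : set_system X :=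
  smallest (sigma_algebra setT) G.

Definition sjoin {X : Type} (G1 G2 : set_system X) : set_system X :=
  gen (G1 `|` G2).

Definition sub_sigma (T : set_system Omega) :=
  sigma_algebra setT T /\ (forall E, T E -> measurable E).

Definition nullsys (Q : probability Omega R) (T : set_system Omega)
  : set_system Omega :=
  gen [set E | exists B, T B /\ Q B = 0%E /\ E `<=` B].

Definition Finf (F : R -> set_system Omega) : set_system Omega :=
  gen (\bigcup_(t in [set t : R | 0 <= t]) F t).

Definition filtration_hyp (Q : probability Omega R) (F : R -> set_system Omega) :=
  [/\ (forall t, 0 <= t -> sub_sigma (F t)),
      (forall s t, 0 <= s -> s <= t -> F s `<=` F t),
      (forall t, 0 <= t ->
          [set E | forall s, t < s -> F s E] = F t) &
      nullsys Q (Finf F) `<=` F 0].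

Definition sigma_rv (X : Omega -> \bar R) : set_system Omega :=
  [set X @^-1` B | B in [set B : set \bar R | measurable B]].

Definition Nsys (Q : probability Omega R) (F : R -> set_system Omega)
    (tau : Omega -> \bar R) : set_system Omega :=
  nullsys Q (sjoin (sigma_rv tau) (Finf F)).

Definition Gfilt (Q : probability Omega R) (F : R -> set_system Omega)
    (tau : Omega -> \bar R) (t : R) : set_system Omega :=
  sjoin (Nsys Q F tau)
    [set E | forall s, t < s ->
       sjoin (F s) (sigma_rv (fun w => Order.min (tau w) s%:E)) E].

Definition stopping_time (H : R -> set_system Omega) (T : Omega -> \bar R) :=
  (forall w, (0 <= T w)%E) /\
  forall t, 0 <= t -> H t [set w | (T w <= t%:E)%E].

Definition sint_from (T : Omega -> \bar R) : set (R * Omega) :=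
  [set p | 0 <= p.1 /\ (T p.2 <= p.1%:E)%E].

Definition optional (H : R -> set_system Omega) : set_system (R * Omega) :=
  gen [set sint_from T | T in stopping_time H].

Definition predictable (H : R -> set_system Omega) : set_system (R * Omega) :=
  gen ([set [set p | p.1 = 0 /\ B p.2] | B in H 0] `|`
       [set E | exists s t B, [/\ 0 <= s, s < t, H s B &
            E = [set p | s < p.1 /\ p.1 <= t /\ B p.2]]]).

Definition Rplus_Omega : set (R * Omega) := [set p | 0 <= p.1].

Definition meas_wrt {X : Type} (D : set X) (S : set_system X) (f : X -> R) :=
  forall B : set R, measurable B -> S (D `&` f @^-1` B).

Definition optional_process (H : R -> set_system Omega) (Y : R * Omega -> R) :=
  meas_wrt Rplus_Omega (optional H) Y.

Definition BO (F : R -> set_system Omega) : set_system (\bar R * (R * Omega)) :=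
  gen [set E | exists B C, [/\ measurable (B : set \bar R), optional F C &
        E = B `*` C]].

Definition split_meas (F : R -> set_system Omega) (Y'' : \bar R -> R * Omega -> R) :=
  meas_wrt ([set x : \bar R | (0 <= x)%E] `*` Rplus_Omega) (BO F)
           (fun q => Y'' q.1 q.2).

(* Identity up to indistinguishability outside an N-measurable Q-null set;
   such a set is contained in a (sigma(tau) \/ F_oo)-measurable Q-null set. *)
Definition splitting_on (Q : probability Omega R) (F : R -> set_system Omega)
    (tau : Omega -> \bar R) (Y : R * Omega -> R) (A : set (R * Omega)) :=
  exists (Y' : R * Omega -> R) (Y'' : \bar R -> R * Omega -> R),
    [/\ optional_process F Y', split_meas F Y'' &
      exists E, [/\ sjoin (sigma_rv tau) (Finf F) E, Q E = 0%E &
        forall w, ~ E w -> forall t, 0 <= t ->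
          Y (t, w) * \1_A (t, w) =
          ((if (t%:E < tau w)%E then Y' (t, w) else Y'' (tau w) (t, w))
             * \1_A (t, w))]].

Definition global_splitting Q F tau (Y : R * Omega -> R) :=
  splitting_on Q F tau Y setT.

Definition Lo (Q : probability Omega R) (F : R -> set_system Omega)
    (tau : Omega -> \bar R) (A : set (R * Omega)) :=
  optional (Gfilt Q F tau) A /\
  forall Y, optional_process (Gfilt Q F tau) Y -> splitting_on Q F tau Y A.

End Defs.

(* Main.v *)
Require Import Defs.
From HB Require Import structures.
From mathcomp Require Import all_boot all_order all_algebra.
From mathcomp Require Import all_classical all_reals all_analysis measurable_realfun.
From mathcomp Require Import zify.
Import Order.TTheory GRing.Theory Num.Theory.
Local Open Scope classical_set_scope.
Local Open Scope ring_scope.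
Set Implicit Arguments. Unset Strict Implicit. Unset Printing Implicit Defensive.

Section SA.
Context {T : Type} (S : set_system T) (hS : sigma_algebra setT S).
Lemma sa0 : S set0. Proof. by case: hS. Qed.
Lemma saC A : S A -> S (~` A). Proof. by case: hS => _ h _ /h; rewrite setTD. Qed.
Lemma saT : S setT. Proof. by rewrite -setC0; apply: saC; exact: sa0. Qed.
Lemma saU (A : (set T)^nat) : (forall n, S (A n)) -> S (\bigcup_n A n).
Proof. by case: hS => _ _; apply. Qed.
Lemma saU2 A B : S A -> S B -> S (A `|` B).
Proof. move=> hA hB; rewrite -bigcup2E; apply: saU => -[|[|n]] //=; exact: sa0. Qed.
Lemma saI2 A B : S A -> S B -> S (A `&` B).
Proof. move=> hA hB; rewrite -[A `&` B]setCK setCI; apply/saC/saU2; exact: saC. Qed.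
Lemma saD A B : S A -> S B -> S (A `\` B).
Proof. by move=> hA hB; rewrite setDE; apply: saI2 => //; exact: saC. Qed.
Lemma saI (A : (set T)^nat) : (forall n, S (A n)) -> S (\bigcap_n A n).
Proof. move=> h; rewrite -[X in S X]setCK setC_bigcap; apply/saC/saU => n; exact: saC. Qed.
End SA.

Lemma gen_sa {T} (G : set_system T) : sigma_algebra setT (gen G).
Proof. exact: smallest_sigma_algebra. Qed.
Lemma gen_sub {T} (G : set_system T) A : G A -> gen G A.
Proof. exact: sub_smallest. Qed.
Lemma gen_min {T} (G C : set_system T) : sigma_algebra setT C -> G `<=` C -> gen G `<=` C.
Proof. exact: smallest_sub. Qed.

Lemma arch {R : realType} (r : R) : 0 < r -> exists n : nat, n.+1%:R^-1 < r.
Proof.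
move=> r0; have r0' : 0 <= r^-1 by rewrite invr_ge0 ltW.
have := archi_boundP r0'.
set n := Num.bound _ => h; exists n.
rewrite -[ltRHS]invrK ltf_pV2 ?posrE ?invr_gt0 //.
by apply: lt_le_trans h _; rewrite ler_nat.
Qed.

Section Opt.
Context {R : realType} {d : measure_display} {Omega : measurableType d}.
Context (H : R -> set_system Omega)
  (hsa : forall t, 0 <= t -> sigma_algebra setT (H t))
  (hmono : forall s t, 0 <= s -> s <= t -> H s `<=` H t).

Definition hitT (b : R) (C : set Omega) : Omega -> \bar R :=
  fun w => if `[< C w >] then b%:E else +oo%E.

Lemma hitT_le b C w x : (hitT b C w <= x%:E)%E <-> (C w /\ b <= x).
Proof.
rewrite /hitT; case: (pselect (C w)) => Cw.
  by rewrite asboolT // lee_fin; split => [->|[]].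
by rewrite asboolF // leye_eq; split => [|[]].
Qed.

Lemma halfline_opt b C : 0 <= b -> H b C -> optional H (sint_from (hitT b C)).
Proof.
move=> b0 hC; apply: gen_sub; apply: (@ex_intro2 _ _ _ (hitT b C)); last by []; split.
  move=> w; rewrite /hitT.
  by case: (pselect (C w)) => Cw; [rewrite asboolT // lee_fin | rewrite asboolF // leey].
move=> t t0; have [bt|tb] := leP b t.
  rewrite (_ : [set w | _] = C); first exact: hmono hC.
  by rewrite predeqE => w /=; rewrite hitT_le; split => [[]|].
rewrite (_ : [set w | _] = set0); first exact: sa0 (hsa t0).
rewrite predeqE => w /=; rewrite hitT_le; split => // -[_ h].
by move: tb; rewrite ltNge h.
Qed.

Lemma halfline_eq b C : 0 <= b ->
  sint_from (hitT b C) = [set p | b <= p.1 /\ C p.2].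
Proof.
move=> b0; rewrite predeqE => p; rewrite /sint_from /= hitT_le; split.
  by case=> _ [].
by case=> h1 h2; split => //; exact: le_trans h1.
Qed.

Definition box (a t : R) (C : set Omega) : set (R * Omega) :=
  [set p | a <= p.1 /\ p.1 <= t /\ C p.2].

Lemma box_opt a t C : 0 <= a -> H a C -> optional H (box a t C).
Proof.
move=> a0 hC; have [ta|hat] := ltP t a.
  rewrite (_ : box _ _ _ = set0); first exact: sa0 (@gen_sa _ _).
  rewrite predeqE => p; split => // -[h1 [h2 _]].
  by have := lt_le_trans ta (le_trans h1 h2); rewrite ltxx.
have t0 : 0 <= t := le_trans a0 hat.
have tn0 n : 0 <= t + n.+1%:R^-1 by rewrite addr_ge0 // invr_ge0.
rewrite (_ : box _ _ _ = sint_from (hitT a C) `\`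
   \bigcup_n sint_from (hitT (t + n.+1%:R^-1) setT)).
  apply: (saD (gen_sa _)); first exact: halfline_opt.
  apply: (saU (gen_sa _)).
  by move=> n; apply: halfline_opt => //; exact: saT (hsa (tn0 n)).
rewrite halfline_eq //; rewrite predeqE => p; split.
  case=> h1 [h2 h3]; split => // -[n _]; rewrite halfline_eq // => -[h4 _].
  have : t < t + n.+1%:R^-1 by rewrite ltrDl invr_gt0.
  by move=> /(lt_le_trans)/(_ h4); rewrite ltNge h2.
case=> -[h1 h3] h2; split => //; split => //.
rewrite leNgt; apply/negP => tp; apply: h2.
have tp' : 0 < p.1 - t by rewrite subr_gt0.
have [n hn] := arch tp'.
exists n => //; rewrite halfline_eq //; split => //.
by rewrite addrC -lerBrDr ltW.
Qed.

Lemma pred_opt : predictable H `<=` optional H.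
Proof.
apply: gen_min; first exact: gen_sa.
move=> E [[B hB <-]|[s [t [B [s0 st hB ->]]]]].
  rewrite (_ : [set p | _] = box 0 0 B); first exact: box_opt.
  rewrite predeqE => p; split.
    by case=> h1 h; rewrite /box /= h1; split.
  by case=> h1 [h2 h3]; split => //; apply/le_anti/andP.
rewrite (_ : [set p | _] = \bigcup_n box (s + n.+1%:R^-1) t B).
  apply: (saU (gen_sa _)) => n; apply: box_opt; first by rewrite addr_ge0 // invr_ge0.
  by apply: hmono hB => //; rewrite lerDl invr_ge0.
rewrite predeqE => p; split.
  case=> h1 [h2 h3]; have h1' : 0 < p.1 - s by rewrite subr_gt0.
  have [n hn] := arch h1'.
  by exists n => //; split => //; rewrite addrC -lerBrDr ltW.
case=> n _ [h1 [h2 h3]]; split => //; apply: lt_le_trans h1.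
by rewrite ltrDl invr_gt0.
Qed.
End Opt.

Lemma meas_gt (R : realType) (a : R) : measurable [set u : \bar R | (a%:E < u)%E].
Proof.
have -> : [set u : \bar R | (a%:E < u)%E] = [set` Interval (BRight a%:E) (BInfty _ false)].
  by rewrite predeqE => u /=; rewrite in_itv /= andbT.
exact: emeasurable_itv.
Qed.

Lemma const_in {T} (S : set_system T) (hS : sigma_algebra setT S) (P : Prop) :
  S [set _ | P].
Proof.
case: (pselect P) => hP.
  by rewrite (_ : [set _ | P] = setT); [exact: saT | rewrite predeqE].
by rewrite (_ : [set _ | P] = set0); [exact: sa0 | rewrite predeqE].
Qed.

Lemma ind1 {R : realType} {T} (A : set T) x : A x -> \1_A x = 1 :> R.
Proof. by move=> h; rewrite indicE mem_set. Qed.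
Lemma ind0 {R : realType} {T} (A : set T) x : ~ A x -> \1_A x = 0 :> R.
Proof. by move=> h; rewrite indicE memNset. Qed.

Lemma meas_ind {R : realType} {X} (D : set X) (S : set_system X) (f : X -> R) A :
  sigma_algebra setT S -> meas_wrt D S f -> S A ->
  meas_wrt D S (fun x => f x * \1_A x).
Proof.
move=> hS hf hA B mB.
have SD : S D by have := hf setT measurableT; rewrite preimage_setT setIT.
rewrite (_ : _ `&` _ = (A `&` (D `&` f @^-1` B)) `|` ((D `&` ~` A) `&` [set _ | B 0])).
  apply: (saU2 hS); first exact: (saI2 hS) (hf B mB).
  apply: (saI2 hS); first exact: (saI2 hS) (saC hS hA).
  exact: const_in.
rewrite predeqE => x /=; case: (pselect (A x)) => hx.
  rewrite ind1 // mulr1; split; first by case=> ? ?; left.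
  by case=> [[_ []]|[[_ //]]].
rewrite ind0 // mulr0; split; first by case=> ? ?; right.
by case=> [[//]|[[? _] ?]].
Qed.

Section Main.
Context {R : realType} {d : measure_display} {Omega : measurableType d}
  (Q : probability Omega R) (F : R -> set_system Omega) (hF : filtration_hyp Q F)
  (tau : Omega -> \bar R) (htau0 : forall w, (0 <= tau w)%E)
  (htau : measurable_fun setT tau).

Local Notation G := (Gfilt Q F tau).
Local Notation S := (sjoin (sigma_rv tau) (Finf F)).

Lemma F_sa t : 0 <= t -> sigma_algebra setT (F t).
Proof. by case: hF => h _ _ _ /h []. Qed.
Lemma F_meas t : 0 <= t -> F t `<=` measurable.
Proof. by case: hF => h _ _ _ /h []. Qed.
Lemma F_mono s t : 0 <= s -> s <= t -> F s `<=` F t.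
Proof. by case: hF => _ h _ _; exact: h. Qed.
Lemma F_rc t E : 0 <= t -> (forall s, t < s -> F s E) -> F t E.
Proof. by case: hF => _ _ h _ t0 hE; rewrite -(h t t0). Qed.

Lemma G_sa t : sigma_algebra setT (G t).
Proof. exact: gen_sa. Qed.
Lemma G_mono s t : 0 <= s -> s <= t -> G s `<=` G t.
Proof.
move=> _ st; apply: gen_min; first exact: gen_sa.
move=> E [hE|hE]; apply: gen_sub; [left => //|right].
by move=> r tr; apply: hE; exact: le_lt_trans tr.
Qed.

Lemma S_sa : sigma_algebra setT S.
Proof. exact: gen_sa. Qed.

Lemma S_meas : S `<=` measurable.
Proof.
apply: gen_min; first exact: sigma_algebra_measurable.
move=> E [[B mB <-]|hE].
  by have := htau measurableT mB; rewrite setTI.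
move: E hE; apply: gen_min; first exact: sigma_algebra_measurable.
by move=> E [t /= t0 hE]; exact: F_meas hE.
Qed.

Lemma null_bigcup (E : (set Omega)^nat) :
  (forall n, S (E n) /\ Q (E n) = 0%E) ->
  S (\bigcup_n E n) /\ Q (\bigcup_n E n) = 0%E.
Proof.
move=> h; split; first by apply: (saU S_sa) => n; case: (h n).
have : Q.-negligible (\bigcup_n E n).
  apply: negligible_bigcup => k; exists (E k); case: (h k) => h1 h2.
  by split => //; exact: S_meas.
case=> N [mN N0 sN]; apply/eqP; rewrite -measure_le0 -N0.
apply: le_measure => //; rewrite inE //.
by apply: bigcupT_measurable => n; apply: S_meas; case: (h n).
Qed.

Lemma null_U2 E1 E2 : S E1 -> Q E1 = 0%E -> S E2 -> Q E2 = 0%E ->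
  S (E1 `|` E2) /\ Q (E1 `|` E2) = 0%E.
Proof.
move=> h1 h2 h3 h4; rewrite -bigcup2E; apply: null_bigcup => -[|[|n]] //=.
by split; [exact: (sa0 S_sa)|exact: measure0].
Qed.

Definition good (A : set (R * Omega)) :=
  exists A1 A2 E, [/\ optional F A1, BO F A2, S E, Q E = 0%E &
    forall w, ~ E w -> forall t, 0 <= t ->
      (A (t, w) <-> (if (t%:E < tau w)%E then A1 (t, w) else A2 (tau w, (t, w))))].

Lemma good_sa : sigma_algebra setT good.
Proof.
split.
- exists set0, set0, set0; split.
  + exact: (sa0 (gen_sa _)).
  + exact: (sa0 (gen_sa _)).
  + exact: (sa0 S_sa).
  + exact: measure0.
  + by move=> w _ t _; case: ifP.
- move=> A [A1 [A2 [Z [g1 g2 sE qE hE]]]].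
  exists (~` A1), (~` A2), Z; split => //.
  + exact: (saC (gen_sa _)).
  + exact: (saC (gen_sa _)).
  + move=> w wE t t0; have := hE w wE t t0.
    by case: ifP => _ h; split => [[_ nA] h1|nA1]; try (apply: nA; exact/h); split => // /h.
- move=> A hA.
  pose P := fun n (p : set (R * Omega) * set (\bar R * (R * Omega)) * set Omega) =>
    [/\ optional F p.1.1, BO F p.1.2, S p.2, Q p.2 = 0%E &
    forall w, ~ p.2 w -> forall t, 0 <= t ->
      (A n (t, w) <-> (if (t%:E < tau w)%E then p.1.1 (t, w) else p.1.2 (tau w, (t, w))))].
  have hex : forall n, exists p, P n p.
    move=> n; have [A1 [A2 [Z h]]] := hA n.
    by exists (A1, A2, Z).
  have [f hf] := choice hex.
  have [sZ qZ] : S (\bigcup_n (f n).2) /\ Q (\bigcup_n (f n).2) = 0%E.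
    by apply: null_bigcup => n; case: (hf n).
  exists (\bigcup_n (f n).1.1), (\bigcup_n (f n).1.2), (\bigcup_n (f n).2); split => //.
  + by apply: (saU (gen_sa _)) => n; case: (hf n).
  + by apply: (saU (gen_sa _)) => n; case: (hf n).
  + move=> w wZ t t0.
    have h n : A n (t, w) <-> (if (t%:E < tau w)%E then (f n).1.1 (t, w) else (f n).1.2 (tau w, (t, w))).
      by case: (hf n) => _ _ _ _; apply => // wn; apply: wZ; exists n.
    case: ifP => ht; split.
    * by case=> n _ /h; rewrite ht => ?; exists n.
    * by case=> n _ hn; exists n => //; apply/h; rewrite ht.
    * by case=> n _ /h; rewrite ht => ?; exists n.
    * by case=> n _ hn; exists n => //; apply/h; rewrite ht.
Qed.

Lemma BO_rect (B : set (\bar R)) C : measurable B -> optional F C -> BO F (B `*` C).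
Proof. by move=> mB oC; apply: gen_sub; exists B, C. Qed.

Lemma BO_sa : sigma_algebra setT (BO F).
Proof. exact: gen_sa. Qed.
Lemma opt_sa : sigma_algebra setT (optional F).
Proof. exact: gen_sa. Qed.

Lemma boxF_opt a t C : 0 <= a -> F a C -> optional F (box a t C).
Proof. apply: box_opt; [exact: F_sa | exact: F_mono]. Qed.

Definition KC a (K : set (\bar R * Omega)) :=
  forall t, BO F [set q | a <= q.2.1 /\ q.2.1 <= t /\ K (q.1, q.2.2)].

Lemma KC_sa a : 0 <= a -> sigma_algebra setT (KC a).
Proof.
move=> a0; split.
- move=> t; rewrite (_ : [set q | _] = set0); first exact: sa0 BO_sa.
  by rewrite predeqE => q; split => // -[_ []].
- move=> K hK t.
  rewrite (_ : [set q | _] = (setT `*` box a t setT) `\` [set q | a <= q.2.1 /\ q.2.1 <= t /\ K (q.1, q.2.2)]).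
    apply: (saD BO_sa) => //; apply: BO_rect => //.
    by apply: boxF_opt => //; exact: saT (F_sa a0).
  rewrite predeqE => q /=; split.
    by case=> h1 [h2 [_ h3]]; split => // -[_ [_ ?]].
  by case=> -[_ [h1 [h2 _]]] h3; split => //; split => //; split => // hK'; apply: h3.
- move=> K hK t.
  rewrite (_ : [set q | _] = \bigcup_n [set q | a <= q.2.1 /\ q.2.1 <= t /\ K n (q.1, q.2.2)]).
    by apply: (saU BO_sa) => n; exact: hK.
  rewrite predeqE => q /=; split.
    by case=> h1 [h2 [n _ h3]]; exists n.
  by case=> n _ [h1 [h2 h3]]; split => //; split => //; exists n.
Qed.

Definition Da a (B : set Omega) := exists B1 K Z, [/\ F a B1, KC a K, S Z, Q Z = 0%E &
  forall w, ~ Z w -> ((a%:E < tau w)%E -> (B w <-> B1 w)) /\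
                     (~ (a%:E < tau w)%E -> (B w <-> K (tau w, w)))].

Lemma Da_sa a : 0 <= a -> sigma_algebra setT (Da a).
Proof.
move=> a0; split.
- exists set0, set0, set0; split.
  + exact: sa0 (F_sa a0).
  + exact: sa0 (KC_sa a0).
  + exact: (sa0 S_sa).
  + exact: measure0.
  + by move=> w _; split.
- move=> A [B1 [K [Z [g1 g2 sZ qZ hZ]]]].
  exists (~` B1), (~` K), Z; split => //.
  + exact: (saC (F_sa a0) g1).
  + exact: (saC (KC_sa a0) g2).
  + move=> w wZ; have [h1 h2] := hZ w wZ; split => [/h1|/h2] h.
      by split => [[_ nA] h3|nA1]; [apply: nA; exact/h | split => // /h].
    by split => [[_ nA] h3|nA1]; [apply: nA; exact/h | split => // /h].
- move=> A hA.
  pose P := fun n (p : set Omega * set (\bar R * Omega) * set Omega) =>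
    [/\ F a p.1.1, KC a p.1.2, S p.2, Q p.2 = 0%E &
    forall w, ~ p.2 w -> ((a%:E < tau w)%E -> (A n w <-> p.1.1 w)) /\
                     (~ (a%:E < tau w)%E -> (A n w <-> p.1.2 (tau w, w)))].
  have hex : forall n, exists p, P n p.
    move=> n; have [A1 [A2 [Z h]]] := hA n.
    by exists (A1, A2, Z).
  have [f hf] := choice hex.
  have [sZ qZ] : S (\bigcup_n (f n).2) /\ Q (\bigcup_n (f n).2) = 0%E.
    by apply: null_bigcup => n; case: (hf n).
  exists (\bigcup_n (f n).1.1), (\bigcup_n (f n).1.2), (\bigcup_n (f n).2); split => //.
  + by apply: (saU (F_sa a0)) => n; case: (hf n).
  + by apply: (saU (KC_sa a0)) => n; case: (hf n).
  + move=> w wZ.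
    have h n : ((a%:E < tau w)%E -> (A n w <-> (f n).1.1 w)) /\
                     (~ (a%:E < tau w)%E -> (A n w <-> (f n).1.2 (tau w, w))).
      by case: (hf n) => _ _ _ _; apply => // wn; apply: wZ; exists n.
    split => ht; split.
    * by case=> n _ /(h n).1 => /(_ ht) ?; exists n.
    * by case=> n _ hn; exists n => //; apply/(h n).1.
    * by case=> n _ /(h n).2 => /(_ ht) ?; exists n.
    * by case=> n _ hn; exists n => //; apply/(h n).2.
Qed.

Lemma Da_N a : 0 <= a -> Nsys Q F tau `<=` Da a.
Proof.
move=> a0; apply: gen_min; first exact: Da_sa.
move=> E [B [sB [qB EB]]]; exists set0, set0, B; split => //.
- exact: sa0 (F_sa a0).
- exact: sa0 (KC_sa a0).
- move=> w wB; have nE : ~ E w by move=> /EB.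
  by split => _; split.
Qed.

Lemma Da_J a : 0 <= a ->
  sjoin (F a) (sigma_rv (fun w => Order.min (tau w) a%:E)) `<=` Da a.
Proof.
move=> a0; apply: gen_min; first exact: Da_sa.
move=> E [hE|[D mD <-]].
  exists E, [set q | E q.2], set0; split => //.
  - move=> t; rewrite (_ : [set q | _] = setT `*` box a t E).
      by apply: BO_rect => //; exact: boxF_opt.
    by rewrite predeqE => q /=; split => [h|[_ h]].
  all: try exact: (sa0 S_sa).
  all: try exact: measure0.
  all: try by move=> w _; split.
exists [set _ | D a%:E], [set q | D q.1], set0; split => //.
- exact: (@const_in _ _ (F_sa a0) (D a%:E)).
- move=> t; rewrite (_ : [set q | _] = D `*` box a t setT).
    by apply: BO_rect => //; apply: boxF_opt => //; exact: saT (F_sa a0).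
  by rewrite predeqE => q; split => [[? [? ?]]|[? [? [? _]]]].
all: try exact: (sa0 S_sa).
all: try exact: measure0.
move=> w _; split => h /=.
    by rewrite min_r //; exact: ltW.
  by rewrite min_l //; rewrite leNgt; apply/negP.
Qed.

Lemma G_Da s a : 0 <= s -> s < a -> G s `<=` Da a.
Proof.
move=> s0 sa; have a0 : 0 <= a by exact: le_trans s0 (ltW sa).
apply: gen_min; first exact: Da_sa.
move=> E [/Da_N|hE]; first exact.
exact: Da_J (hE a sa).
Qed.

Lemma good_box a t B : 0 <= a -> Da a B -> good (box a t B).
Proof.
move=> a0 [B1 [K [Z [g1 g2 sZ qZ hZ]]]].
exists (box a t B1),
  (([set u | (a%:E < u)%E] `*` box a t B1) `|`
   (([set u | ~ (a%:E < u)%E] `*` setT) `&` [set q | a <= q.2.1 /\ q.2.1 <= t /\ K (q.1, q.2.2)])), Z.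
split => //.
- exact: boxF_opt.
- apply: (saU2 BO_sa); first by apply: BO_rect; [exact: meas_gt | exact: boxF_opt].
  apply: (saI2 BO_sa) => //; apply: BO_rect; last exact: saT opt_sa.
  exact: (measurableC (meas_gt a)).
- move=> w wZ t' t0; have [h1 h2] := hZ w wZ.
  rewrite /box /=; case: ifP => ht.
    split => -[ha [hb hc]]; (split => //; split => //); apply/h1 => //.
      by apply: le_lt_trans ht; rewrite lee_fin.
    by apply: le_lt_trans ht; rewrite lee_fin.
  case: (pselect (a%:E < tau w)%E) => hat; split.
  - by case=> ha [hb hc]; left; split => //; split => //; split => //; exact/h1.
  - case=> [[_ [ha [hb hc]]]|[[//] _]].
    by split => //; split => //; exact/h1.
  - by case=> ha [hb hc]; right; split => //; split => //; split => //; exact/h2.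
  - case=> [[//]|[_ [ha [hb hc]]]].
    by split => //; split => //; exact/h2.
Qed.
Definition Dp r (B : set Omega) := exists B1 C1, [/\ F r B1, F r C1 &
  forall w, ((r%:E < tau w)%E -> (B w <-> B1 w)) /\ (tau w = 0%:E -> (B w <-> C1 w))].

Lemma Dp_sa r : 0 <= r -> sigma_algebra setT (Dp r).
Proof.
move=> r0; split.
- exists set0, set0; split.
  + exact: sa0 (F_sa r0).
  + exact: sa0 (F_sa r0).
  + by move=> w; split.
- move=> A [B1 [C1 [g1 g2 hZ]]].
  exists (~` B1), (~` C1); split => //.
  + exact: (saC (F_sa r0) g1).
  + exact: (saC (F_sa r0) g2).
  + move=> w; have [h1 h2] := hZ w; split => [/h1|/h2] h.
      by split => [[_ nA] h3|nA1]; [apply: nA; exact/h | split => // /h].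
    by split => [[_ nA] h3|nA1]; [apply: nA; exact/h | split => // /h].
- move=> A hA.
  pose P := fun n (p : set Omega * set Omega) =>
    [/\ F r p.1, F r p.2 &
    forall w, ((r%:E < tau w)%E -> (A n w <-> p.1 w)) /\ (tau w = 0%:E -> (A n w <-> p.2 w))].
  have hex : forall n, exists p, P n p.
    by move=> n; have [A1 [A2 h]] := hA n; exists (A1, A2).
  have [f hf] := choice hex.
  exists (\bigcup_n (f n).1), (\bigcup_n (f n).2); split => //.
  + by apply: (saU (F_sa r0)) => n; case: (hf n).
  + by apply: (saU (F_sa r0)) => n; case: (hf n).
  + move=> w.
    have h n : ((r%:E < tau w)%E -> (A n w <-> (f n).1 w)) /\ (tau w = 0%:E -> (A n w <-> (f n).2 w)).
      by case: (hf n) => _ _; apply.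
    split => ht; split.
    * by case=> n _ /(h n).1 => /(_ ht) ?; exists n.
    * by case=> n _ hn; exists n => //; apply/(h n).1.
    * by case=> n _ /(h n).2 => /(_ ht) ?; exists n.
    * by case=> n _ hn; exists n => //; apply/(h n).2.
Qed.

Lemma Dp_J r : 0 < r ->
  sjoin (F r) (sigma_rv (fun w => Order.min (tau w) r%:E)) `<=` Dp r.
Proof.
move=> r0; have r0' := ltW r0.
apply: gen_min; first exact: Dp_sa.
move=> E [hE|[D mD <-]].
  by exists E, E; split => // w; split.
exists [set _ | D r%:E], [set _ | D 0%:E]; split.
- exact: (@const_in _ _ (F_sa r0') (D r%:E)).
- exact: (@const_in _ _ (F_sa r0') (D 0%:E)).
- move=> w; split => h /=.
    by rewrite min_r //; exact: ltW.
  by rewrite h min_l // lee_fin.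
Qed.

Definition D0 (B : set Omega) := exists B1 C1 Z, [/\ F 0 B1, F 0 C1, S Z, Q Z = 0%E &
  forall w, ~ Z w -> ((0%:E < tau w)%E -> (B w <-> B1 w)) /\ (tau w = 0%:E -> (B w <-> C1 w))].

Lemma D0_sa : sigma_algebra setT D0.
Proof.
have r0 : (0 : R) <= 0 by [].
split.
- exists set0, set0, set0; split.
  + exact: sa0 (F_sa r0).
  + exact: sa0 (F_sa r0).
  + exact: (sa0 S_sa).
  + exact: measure0.
  + by move=> w; split.
- move=> A [B1 [C1 [Z [g1 g2 sZ qZ hZ]]]].
  exists (~` B1), (~` C1), Z; split => //.
  + exact: (saC (F_sa r0) g1).
  + exact: (saC (F_sa r0) g2).
  + move=> w wZ; have [h1 h2] := hZ w wZ; split => [/h1|/h2] h.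
      by split => [[_ nA] h3|nA1]; [apply: nA; exact/h | split => // /h].
    by split => [[_ nA] h3|nA1]; [apply: nA; exact/h | split => // /h].
- move=> A hA.
  pose P := fun n (p : set Omega * set Omega * set Omega) =>
    [/\ F 0 p.1.1, F 0 p.1.2, S p.2, Q p.2 = 0%E &
    forall w, ~ p.2 w -> ((0%:E < tau w)%E -> (A n w <-> p.1.1 w)) /\ (tau w = 0%:E -> (A n w <-> p.1.2 w))].
  have hex : forall n, exists p, P n p.
    by move=> n; have [A1 [A2 [Z h]]] := hA n; exists (A1, A2, Z).
  have [f hf] := choice hex.
  have [sZ qZ] : S (\bigcup_n (f n).2) /\ Q (\bigcup_n (f n).2) = 0%E.
    by apply: null_bigcup => n; case: (hf n).
  exists (\bigcup_n (f n).1.1), (\bigcup_n (f n).1.2), (\bigcup_n (f n).2); split => //.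
  + by apply: (saU (F_sa r0)) => n; case: (hf n).
  + by apply: (saU (F_sa r0)) => n; case: (hf n).
  + move=> w wZ.
    have h n : ((0%:E < tau w)%E -> (A n w <-> (f n).1.1 w)) /\ (tau w = 0%:E -> (A n w <-> (f n).1.2 w)).
      by case: (hf n) => _ _ _ _; apply => // wn; apply: wZ; exists n.
    split => ht; split.
    * by case=> n _ /(h n).1 => /(_ ht) ?; exists n.
    * by case=> n _ hn; exists n => //; apply/(h n).1.
    * by case=> n _ /(h n).2 => /(_ ht) ?; exists n.
    * by case=> n _ hn; exists n => //; apply/(h n).2.
Qed.

Lemma D0_N : Nsys Q F tau `<=` D0.
Proof.
apply: gen_min; first exact: D0_sa.
move=> E [B [sB [qB EB]]]; exists set0, set0, B; split => //.
- exact: sa0 (F_sa (lexx 0)).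
- exact: sa0 (F_sa (lexx 0)).
- move=> w wB; have nE : ~ E w by move=> /EB.
  by split => _; split.
Qed.
Definition linf (f : nat -> set Omega) := [set w | exists m, forall n, (m <= n)%N -> f n w].

Lemma inv_le m n : (m <= n)%N -> n.+1%:R^-1 <= m.+1%:R^-1 :> R.
Proof. by move=> mn; rewrite lef_pV2 ?posrE ?ltr0Sn // ler_nat ltnS. Qed.

Lemma linf_F0 f : (forall n, F (n.+1%:R^-1) (f n)) -> F 0 (linf f).
Proof.
move=> hf; apply: F_rc => // r r0; have [k hk] := arch r0.
rewrite (_ : linf f = \bigcup_m \bigcap_n f (m + k + n)%N).
  apply: (saU (F_sa (ltW r0))) => m; apply: (saI (F_sa (ltW r0))) => n.
  apply: F_mono (hf _); first by rewrite invr_ge0.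
  apply: le_trans (ltW hk); apply: inv_le; lia.
rewrite predeqE => w; split.
  by case=> m h; exists m => // n _; apply: h; lia.
case=> m _ h; exists (m + k)%N => n hn; have := h (n - (m + k))%N I.
by rewrite subnKC.
Qed.

Lemma tau_pos_bound w : (0%:E < tau w)%E ->
  exists m, forall n, (m <= n)%N -> ((n.+1%:R^-1)%:E < tau w)%E.
Proof.
case: (tau w) => [x| |] // h.
  rewrite lte_fin in h; have [m hm] := arch h; exists m => n mn.
  by rewrite lte_fin; exact: le_lt_trans (inv_le mn) hm.
by exists 0%N => *; exact: ltry.
Qed.

Lemma I0_D0 E : (forall r, 0 < r ->
  sjoin (F r) (sigma_rv (fun w => Order.min (tau w) r%:E)) E) -> D0 E.
Proof.
move=> hE.
have h n : Dp (n.+1%:R^-1) E.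
  by apply: Dp_J; [rewrite invr_gt0 | apply: hE; rewrite invr_gt0].
pose P := fun n (p : set Omega * set Omega) => [/\ F (n.+1%:R^-1) p.1, F (n.+1%:R^-1) p.2 &
  forall w, (((n.+1%:R^-1)%:E < tau w)%E -> (E w <-> p.1 w)) /\ (tau w = 0%:E -> (E w <-> p.2 w))].
have hex : forall n, exists p, P n p.
  by move=> n; have [A1 [A2 hh]] := h n; exists (A1, A2).
have [f hf] := choice hex.
exists (linf (fun n => (f n).1)), (linf (fun n => (f n).2)), set0; split.
- by apply: linf_F0 => n; case: (hf n).
- by apply: linf_F0 => n; case: (hf n).
- exact: (sa0 S_sa).
- exact: measure0.
- move=> w _.
  have hw n := let: And3 _ _ hh := hf n in hh w.
  split => ht.
    have [m0 hm0] := tau_pos_bound ht; split.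
      by move=> Ew; exists m0 => n hn; apply/((hw n).1 (hm0 n hn)).
    case=> m hm; apply/((hw (maxn m m0)).1 (hm0 _ (leq_maxr _ _))).
    by apply: hm; exact: leq_maxl.
  split.
    by move=> Ew; exists 0%N => n _; apply/((hw n).2 ht).
  by case=> m hm; apply/((hw m).2 ht); exact: hm.
Qed.

Lemma G0_D0 : G 0 `<=` D0.
Proof.
apply: gen_min; first exact: D0_sa.
move=> E [/D0_N|hE] //; exact: I0_D0.
Qed.

Lemma good_zero B : D0 B -> good [set p | p.1 = 0 /\ B p.2].
Proof.
move=> [B1 [C1 [Z [g1 g2 sZ qZ hZ]]]].
exists (box 0 0 B1), (setT `*` box 0 0 C1), Z; split => //.
- exact: boxF_opt.
- by apply: BO_rect => //; exact: boxF_opt.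
- move=> w wZ t' t0; have [h1 h2] := hZ w wZ.
  have e0 : (0 <= t' /\ t' <= 0) <-> t' = 0.
    by split => [[? ?]|->]; [apply/le_anti/andP|].
  rewrite /box /=; case: ifP => ht; split.
  + case=> et hB; rewrite et in ht *; split => //; split => //; exact/h1.
  + case=> _ [tt0 hB1]; have et : t' = 0 by apply/le_anti/andP.
    rewrite et in ht *; split => //; exact/h1.
  + case=> et hB; rewrite et in ht *; split => //; split => //; split => //; apply/h2 => //.
    apply/le_anti/andP; split; last exact: htau0.
    by move: ht; rewrite leNgt => /negbT.
  + case=> _ [_ [tt0 hC1]]; have et : t' = 0 by apply/le_anti/andP.
    rewrite et in ht *; split => //; apply/h2 => //.
    apply/le_anti/andP; split; last exact: htau0.
    by move: ht; rewrite leNgt => /negbT.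
Qed.

Lemma pred_good : predictable G `<=` good.
Proof.
apply: gen_min; first exact: good_sa.
move=> E [[B hB <-]|[s [t [B [s0 st hB ->]]]]].
  exact/good_zero/G0_D0.
rewrite (_ : [set p | _] = \bigcup_n box (s + n.+1%:R^-1) t B).
  apply: (saU good_sa) => n; apply: good_box; first by rewrite addr_ge0 // invr_ge0.
  by apply: G_Da hB => //; rewrite ltrDl invr_gt0.
rewrite predeqE => p; split.
  case=> h1 [h2 h3]; have h1' : 0 < p.1 - s by rewrite subr_gt0.
  have [n hn] := arch h1'.
  by exists n => //; split => //; rewrite addrC -lerBrDr ltW.
case=> n _ [h1 [h2 h3]]; split => //; apply: lt_le_trans h1.
by rewrite ltrDl invr_gt0.
Qed.
Lemma main_in A (hA : predictable G A) : Lo Q F tau A <->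
  (forall Y : R * Omega -> R, optional_process G Y ->
     global_splitting Q F tau (fun p => Y p * \1_A p)).
Proof.
split.
  case=> oA hL Y oY.
  have [Y' [Y'' [k1 s1 [E1 [sE1 qE1 hE1]]]]] := hL Y oY.
  have [A1 [A2 [E2 [g1 g2 sE2 qE2 hE2]]]] := pred_good hA.
  have [sE qE] := null_U2 sE1 qE1 sE2 qE2.
  exists (fun p => Y' p * \1_A1 p), (fun u p => Y'' u p * \1_A2 (u, p)); split.
  - exact: meas_ind opt_sa k1 g1.
  - rewrite /split_meas.
    have -> : (fun q : \bar R * (R * Omega) => Y'' q.1 q.2 * \1_A2 (q.1, q.2)) =
              (fun q => Y'' q.1 q.2 * \1_A2 q) by apply: funext => -[].
    exact: meas_ind BO_sa s1 g2.
  - exists (E1 `|` E2); split => // w wE t t0.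
    have wE1 : ~ E1 w by move=> h; apply: wE; left.
    have wE2 : ~ E2 w by move=> h; apply: wE; right.
    have h1 := hE1 w wE1 t t0; have h2 := hE2 w wE2 t t0.
    rewrite (@ind1 _ _ setT) // !mulr1; move: h1 h2.
    case: ifP => ht h1 h2.
      case: (pselect (A (t, w))) => hAw.
        rewrite (ind1 hAw) in h1 *; rewrite (@ind1 _ _ A1 (t, w)); last exact/h2.
        by rewrite !mulr1 in h1 *.
      by rewrite (ind0 hAw) (@ind0 _ _ A1 (t, w)) ?mulr0 // => /h2.
    case: (pselect (A (t, w))) => hAw.
      rewrite (ind1 hAw) in h1 *; rewrite (@ind1 _ _ A2 (tau w, (t, w))); last exact/h2.
      by rewrite !mulr1 in h1 *.
    by rewrite (ind0 hAw) (@ind0 _ _ A2 (tau w, (t, w))) ?mulr0 // => /h2.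
move=> h; split.
  exact: (pred_opt (H := G) (fun t _ => G_sa t) (fun s t s0 st => G_mono s0 st) hA).
move=> Y oY; have [Y' [Y'' [k1 s1 [E [sE qE hE]]]]] := h Y oY.
exists Y', Y''; split => //; exists E; split => // w wE t t0.
have := hE w wE t t0; rewrite (@ind1 _ _ setT) // !mulr1 => e.
case: (pselect (A (t, w))) => hAw; last by rewrite (ind0 hAw) !mulr0.
by rewrite (ind1 hAw) in e *; rewrite mulr1 in e; rewrite e mulr1.
Qed.
End Main.

Theorem mainTheorem4 (R : realType) (d : measure_display) (Omega : measurableType d)
  (Q : probability Omega R) (F : R -> set_system Omega)
  (hF : filtration_hyp Q F)
  (tau : Omega -> \bar R) (htau0 : forall w, (0 <= tau w)%E)
  (htau : measurable_fun setT tau)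
  (A : set (R * Omega)) (hA : predictable (Gfilt Q F tau) A) :
  Lo Q F tau A <->
  (forall Y : R * Omega -> R, optional_process (Gfilt Q F tau) Y ->
     global_splitting Q F tau (fun p => Y p * \1_A p)).
Proof. exact: (main_in hF htau0 htau hA). Qed.
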